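(* Let $1\le k\le d$ and let $\mu$ be a probability distribution on $Q_d$ with $w_i^0\ge \frac34-\frac1{4k}$ for all $i\in[d]$. Then $(\mathbf 0,\mathbf 0)$ is a $k$-local equilibrium.
   Context: $Q_d=\{0,1\}^d$ with the Hamming distance $d(X,Y)=|\{i: x_i\neq y_i\}|$. A probability distribution on $Q_d$ is a function $\mu:Q_d\to\mathbb R_{\ge0}$ with $\sum_{V\in Q_d}\mu(V)=1$, extended to subsets by $\mu(\mathcal A)=\sum_{V\in\mathcal A}\mu(V)$. For $A,B\in Q_d$ let $V(A,B)=\{X\in Q_d: d(X,A)<d(X,B)\}$ and $T(A,B)=\{X\in Q_d: d(X,A)=d(X,B)\}$. The payoffs in position $(A,B)$ are $P_1(A,B)=\mu(V(A,B))+\frac12\mu(T(A,B))$ and $P_2(A,B)=\mu(V(B,A))+\frac12\mu(T(A,B))$. The pair $(A,B)$ is a $k$-local equilibrium if $P_1(A,B)\ge P_1(A',B)$ for all $A'\in Q_d$ with $d(A,A')\le k$ and $P_2(A,B)\ge P_2(A,B')$ for all $B'\in Q_d$ with $d(B,B')\le k$. For $i\in[d]$, $w_i^0=\mu(\{X\in Q_d: x_i=0\})$. $\mathbf 0=(0,\dots,0)$. *)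

(* Defs.v *)
From HB Require Import structures.
From mathcomp Require Import all_boot all_order all_algebra.
Set Implicit Arguments. Unset Strict Implicit. Unset Printing Implicit Defensive.
Import Order.TTheory GRing.Theory Num.Theory.
Local Open Scope ring_scope.

(* Hypercube Q_d = {0,1}^d, a vertex is a finite function 'I_d -> bool
   (false = 0, true = 1). *)
Definition cube (d : nat) := {ffun 'I_d -> bool}.

Definition hamming (d : nat) (X Y : cube d) : nat := #|[set i | X i != Y i]|.

Section Game.
Variables (R : realFieldType) (d : nat).

Definition is_distribution (mu : cube d -> R) : Prop :=
  (forall V, 0 <= mu V) /\ \sum_(V : cube d) mu V = 1.

Definition measure (mu : cube d -> R) (A : {set cube d}) : R :=
  \sum_(V in A) mu V.

Definition Vor (A B : cube d) : {set cube d} :=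
  [set X | hamming X A < hamming X B]%N.
Definition Tie (A B : cube d) : {set cube d} :=
  [set X | hamming X A == hamming X B].

Definition P1 (mu : cube d -> R) (A B : cube d) : R :=
  measure mu (Vor A B) + measure mu (Tie A B) / 2.
Definition P2 (mu : cube d -> R) (A B : cube d) : R :=
  measure mu (Vor B A) + measure mu (Tie A B) / 2.

Definition local_equilibrium (k : nat) (mu : cube d -> R) (A B : cube d) : Prop :=
  (forall A' : cube d, (hamming A A' <= k)%N -> P1 mu A' B <= P1 mu A B) /\
  (forall B' : cube d, (hamming B B' <= k)%N -> P2 mu A B' <= P2 mu A B).

Definition w0 (mu : cube d -> R) (i : 'I_d) : R :=
  measure mu [set X : cube d | ~~ X i].

Definition zero_vertex : cube d := [ffun _ => false].
End Game.

(* Main.v *)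
Require Import Defs.
From HB Require Import structures.
From mathcomp Require Import all_boot all_order all_algebra.
From mathcomp Require Import zify ring lra.
Import Order.TTheory GRing.Theory Num.Theory.
Local Open Scope ring_scope.

Lemma card_sum d (p : pred 'I_d) : #|[set i | p i]| = (\sum_i (p i : nat))%N.
Proof.
rewrite -sum1_card big_mkcond; apply: eq_bigr => i _; rewrite inE; by case: (p i).
Qed.

Lemma measE (R : realFieldType) d (mu : cube d -> R) (A : {set cube d}) :
  measure mu A = \sum_X mu X * (X \in A : nat)%:R.
Proof.
rewrite /measure big_mkcond; apply: eq_bigr => X _; case: (X \in A);
by rewrite ?mulr1 ?mulr0.
Qed.

Lemma decomp d (X A : cube d) :
  (hamming X A + 2 * (\sum_i (X i && A i : nat)) =
   hamming X (zero_vertex d) + \sum_i (A i : nat))%N /\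
  (\sum_i (X i && A i : nat) <= \sum_i (A i : nat))%N.
Proof.
split; last by apply: leq_sum => i _; case: (X i); case: (A i).
rewrite /hamming !card_sum big_distrr -!big_split /=; apply: eq_bigr => i _.
rewrite ffunE; by case: (X i); case: (A i).
Qed.

Lemma hamming0 d (A : cube d) :
  hamming (zero_vertex d) A = (\sum_i (A i : nat))%N.
Proof.
rewrite /hamming card_sum; apply: eq_bigr => i _; rewrite ffunE; by case: (A i).
Qed.

Lemma expY (R : realFieldType) d (mu : cube d -> R) (A : cube d) :
  is_distribution mu ->
  \sum_X mu X * (\sum_i (X i && A i : nat))%:R =
  \sum_i (if A i then 1 - w0 mu i else 0).
Proof.
move=> [_ H1].
under eq_bigr => X _ do rewrite natr_sum mulr_sumr.
rewrite exchange_big /=; apply: eq_bigr => i _.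
case: (A i).
  transitivity ((\sum_V mu V) - w0 mu i); last by rewrite H1.
  rewrite /w0 measE -sumrB; apply: eq_bigr => X _; rewrite inE.
  by case: (X i) => /=; rewrite ?mulr1 ?mulr0 ?subr0 ?subrr.
by rewrite big1 // => X _; rewrite andbF mulr0.
Qed.

Lemma P1_bound (R : realFieldType) (d k : nat) (mu : cube d -> R) (A : cube d) :
  (1 <= k)%N ->
  is_distribution mu ->
  (forall i : 'I_d, 3 / 4 - 1 / (4 * k%:R) <= w0 mu i) ->
  (hamming (zero_vertex d) A <= k)%N ->
  P1 mu A (zero_vertex d) <= P1 mu (zero_vertex d) (zero_vertex d).
Proof.
move=> k1 Hd Hw.
rewrite hamming0.
set m := (\sum_i (A i : nat))%N => mk.
have H00 : P1 mu (zero_vertex d) (zero_vertex d) = 1 / 2.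
  rewrite /P1 !measE; case: Hd => _ H1.
  rewrite big1; last by move=> X _; rewrite inE ltnn mulr0.
  rewrite add0r; transitivity ((\sum_V mu V) / 2); last by rewrite H1.
  congr (_ / _); apply: eq_bigr => X _.
  by rewrite inE eqxx /= mulr1.
rewrite H00.
set Y := fun X : cube d => (\sum_i (X i && A i : nat))%N.
set c := fun X : cube d => (2 * (X \in Vor A (zero_vertex d)) +
                              (X \in Tie A (zero_vertex d)))%N.
have pw : forall X, ((m + 1) * c X <= 4 * Y X + (m == 0%N))%N.
  move=> X; have [e le] := decomp _ X A.
  rewrite /c /Y !inE.
  move: e le; rewrite -/m.
  set a := hamming X A; set b := hamming X (zero_vertex d).
  set y := (\sum_i (X i && A i : nat))%N.
  move=> e le.
  case: (ltnP a b) => h1; case: (eqVneq a b) => h2; case: (eqVneq m 0%N) => h3 /=;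
  lia.
have HS : (m + 1)%:R * \sum_X mu X * (c X)%:R <=
          4 * \sum_X mu X * (Y X)%:R + (m == 0%N)%:R.
  case: (Hd) => Hpos H1.
  rewrite mulr_sumr mulr_sumr.
  have -> : ((m == 0%N) : nat)%:R = \sum_X mu X * ((m == 0%N) : nat)%:R :> R.
    by rewrite -mulr_suml H1 mul1r.
  rewrite -big_split /=; apply: ler_sum => X _.
  rewrite mulrCA [4 * _]mulrCA -mulrDr; apply: ler_wpM2l; first exact: Hpos.
  by rewrite -natrM -natrM -natrD ler_nat pw.
have HE : 4 * \sum_X mu X * (Y X)%:R + (m == 0%N)%:R <= (m + 1)%:R.
  rewrite /Y expY //.
  have Hle : \sum_i (if A i then 1 - w0 mu i else 0) <=
            \sum_i (if A i then 1/4 + 1/(4 * k%:R) else 0 : R).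
    apply: ler_sum => i _; case: (A i) => //; have := Hw i; lra.
  have Heq : \sum_i (if A i then 1/4 + 1/(4 * k%:R) else 0 : R) =
            m%:R * (1/4 + 1/(4 * k%:R)).
    rewrite /m natr_sum mulr_suml; apply: eq_bigr => i _; case: (A i) => /=;
    by rewrite ?mul1r ?mul0r.
  have kpos : 0 < k%:R :> R by rewrite ltr0n.
  have mk' : m%:R <= k%:R :> R by rewrite ler_nat.
  have Heq2 : 4 * (m%:R * (1 / 4 + 1 / (4 * k%:R))) = m%:R + m%:R / k%:R :> R.
    field; by rewrite lt0r_neq0.
  move: Hle Heq Heq2.
  set S := \sum_i _; set T := \sum_i _; set Z := m%:R * _.
  move=> Hle Heq Heq2.
  rewrite natrD.
  case: eqVneq => hm.
    have : m%:R / k%:R = 0 :> R by rewrite hm mul0r.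
    rewrite /=; lra.
  rewrite /= addr0.
  have : m%:R / k%:R <= 1 :> R by rewrite ler_pdivrMr // mul1r.
  lra.
have Hc : \sum_X mu X * (c X)%:R <= 1.
  have m1 : 0 < (m + 1)%:R :> R by rewrite ltr0n addn1.
  rewrite -(ler_pM2l m1) mulr1; exact: le_trans HS HE.
have : \sum_X mu X * (c X)%:R =
       2 * measure mu (Vor A (zero_vertex d)) + measure mu (Tie A (zero_vertex d)).
  rewrite !measE mulr_sumr -big_split /=; apply: eq_bigr => X _.
  by rewrite /c natrD natrM mulrDr mulrCA.
rewrite /P1; lra.
Qed.

Theorem mainTheorem4 (R : realFieldType) (d k : nat) (mu : cube d -> R) :
  (1 <= k)%N -> (k <= d)%N ->
  is_distribution mu ->
  (forall i : 'I_d, 3 / 4 - 1 / (4 * k%:R) <= w0 mu i) ->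
  local_equilibrium k mu (zero_vertex d) (zero_vertex d).
Proof.
move=> k1 _ Hd Hw; split => A hA.
  exact: (@P1_bound R d k mu A k1 Hd Hw hA).
have -> : P2 mu (zero_vertex d) A = P1 mu A (zero_vertex d).
  rewrite /P2 /P1; congr (_ + _ / _); congr (measure _ _).
  by apply/setP => X; rewrite !inE eq_sym.
exact: (@P1_bound R d k mu A k1 Hd Hw hA).
Qed.
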